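(* Let $\alpha\in(0,1]$ and $\beta\in(0,\alpha)$. Let $\Psi:\mathbb{R}^d\to\mathbb{R}^d$ send stable leaves to stable leaves and have finite best Lipschitz constant $L$. Then for every $K\in\mathcal{K}$, the function $K\circ\Psi$ belongs to $\mathcal{K}$ and $\|K\circ\Psi\|\le3\max(1,L)\|K\|$.
   Context: $\mathbb{R}^d=\mathbb{R}^{d_u}\times\mathbb{R}^{d_s}$ with points $(x,y)$; the stable leaves are the sets $\{x\}\times\mathbb{R}^{d_s}$, and $\Psi$ sends stable leaves to stable leaves if it maps each stable leaf into a stable leaf. $\mathcal{K}=\mathcal{K}^{\alpha,\beta}$ is the class of matrix-valued functions $K$ on $\mathbb{R}^d$ for which there is a constant $C$ such that for all $x,x'\in\mathbb{R}^{d_u}$, $y,y'\in\mathbb{R}^{d_s}$: $|K(x,y)|\le C$; $|K(x,y)-K(x',y)|\le C|x-x'|^\beta$; $|K(x,y)-K(x,y')|\le C|y-y'|^\alpha$; $|K(x,y)-K(x',y)-K(x,y')+K(x',y')|\le C|x-x'|^\beta|y-y'|^{\alpha-\beta}$. For $K\in\mathcal{K}$, $\|K\|$ is the smallest such $C$. *)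

(* Defs.v *)
From HB Require Import structures.
From mathcomp Require Import all_boot all_order all_algebra.
From mathcomp Require Import all_classical all_reals all_analysis.
Set Implicit Arguments. Unset Strict Implicit. Unset Printing Implicit Defensive.
Import Order.TTheory GRing.Theory Num.Theory.
Import numFieldNormedType.Exports.
Local Open Scope classical_set_scope.
Local Open Scope ring_scope.

Definition eucl (R : realType) (n : nat) (v : 'rV[R]_n) : R :=
  Num.sqrt (\sum_(i < n) (v ord0 i) ^+ 2).

(* R^d = R^{d_u} x R^{d_s}; points are pairs (x, y); Euclidean distance. *)
Definition pdist (R : realType) (du ds : nat)
  (p q : 'rV[R]_du * 'rV[R]_ds) : R :=
  Num.sqrt (eucl (p.1 - q.1) ^+ 2 + eucl (p.2 - q.2) ^+ 2).

(* Psi maps each stable leaf {x} x R^{d_s} into a stable leaf. *)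
Definition sends_stable_leaves (R : realType) (du ds : nat)
  (Psi : 'rV[R]_du * 'rV[R]_ds -> 'rV[R]_du * 'rV[R]_ds) : Prop :=
  forall x y y', (Psi (x, y)).1 = (Psi (x, y')).1.

Definition lipschitz_with (R : realType) (du ds : nat)
  (Psi : 'rV[R]_du * 'rV[R]_ds -> 'rV[R]_du * 'rV[R]_ds) (L : R) : Prop :=
  0 <= L /\ forall p q, pdist (Psi p) (Psi q) <= L * pdist p q.

Definition lip_const (R : realType) (du ds : nat)
  (Psi : 'rV[R]_du * 'rV[R]_ds -> 'rV[R]_du * 'rV[R]_ds) : R :=
  inf [set L | lipschitz_with Psi L].

(* C is an admissible constant for K in the class K^{alpha,beta};
   matrices carry the MathComp-Analysis norm (max of absolute entries). *)
Definition Kbound (R : realType) (du ds m n : nat) (alpha beta : R)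
  (K : 'rV[R]_du -> 'rV[R]_ds -> 'M[R]_(m, n)) (C : R) : Prop :=
  forall x x' y y',
    [/\ `|K x y| <= C,
        `|K x y - K x' y| <= C * (eucl (x - x')) `^ beta,
        `|K x y - K x y'| <= C * (eucl (y - y')) `^ alpha &
        `|K x y - K x' y - K x y' + K x' y'|
          <= C * (eucl (x - x')) `^ beta * (eucl (y - y')) `^ (alpha - beta)].

Definition inKclass (R : realType) (du ds m n : nat) (alpha beta : R)
  (K : 'rV[R]_du -> 'rV[R]_ds -> 'M[R]_(m, n)) : Prop :=
  exists C, Kbound alpha beta K C.

Definition Knorm (R : realType) (du ds m n : nat) (alpha beta : R)
  (K : 'rV[R]_du -> 'rV[R]_ds -> 'M[R]_(m, n)) : R :=
  inf [set C | Kbound alpha beta K C].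

Definition Kcomp (R : realType) (du ds m n : nat)
  (K : 'rV[R]_du -> 'rV[R]_ds -> 'M[R]_(m, n))
  (Psi : 'rV[R]_du * 'rV[R]_ds -> 'rV[R]_du * 'rV[R]_ds) :
  'rV[R]_du -> 'rV[R]_ds -> 'M[R]_(m, n) :=
  fun x y => K (Psi (x, y)).1 (Psi (x, y)).2.

(* Main.v *)
Require Import Defs.
From HB Require Import structures.
From mathcomp Require Import all_boot all_order all_algebra.
From mathcomp Require Import all_classical all_reals all_analysis.
Import Order.TTheory GRing.Theory Num.Theory.
Import numFieldNormedType.Exports.
Local Open Scope ring_scope.

Section Aux.
Variable R : realType.

Lemma powR_mono (r x y : R) : 0 <= r -> 0 <= x -> x <= y -> x `^ r <= y `^ r.
Proof. move=> r0 x0 xy; apply: ge0_ler_powR => //; rewrite nnegrE //; exact: le_trans xy. Qed.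
Arguments powR_mono {r x y}.

Lemma powR_ge1 (t r : R) : 1 <= t -> 0 <= r -> 1 <= t `^ r.
Proof. by move=> t1 r0; rewrite -(powRr0 t); apply: ler_powR. Qed.

Lemma powR_swap (t a b : R) : 0 <= t -> t <= 1 -> 0 < b -> b <= a -> t `^ a <= t `^ b.
Proof.
move=> t0 t1 b0 ba; case: (eqVneq t 0) => [->|tn0].
  by rewrite !powR0 // gt_eqF // (lt_le_trans b0 ba).
apply: ger_powR => //; rewrite t1 andbT lt_neqAle eq_sym tn0 t0 //.
Qed.

Lemma powR_leM (L r : R) : 0 <= L -> 0 <= r -> r <= 1 -> L `^ r <= Num.max 1 L.
Proof.
move=> L0 r0 r1; have M1 : 1 <= Num.max 1 L by rewrite le_max lexx.
have LM : L <= Num.max 1 L by rewrite le_max lexx orbT.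
have h1 := powR_mono r0 L0 LM.
apply: (le_trans h1).
exact: ler1_powR.
Qed.

Lemma key2 (C a e1 e2 X beta alpha : R) : 0 <= C -> 0 <= e1 -> e1 <= a ->
  0 <= e2 -> e2 <= a -> 0 < beta -> beta <= alpha ->
  X <= 2 * C -> X <= C * e1 `^ beta + C * e2 `^ alpha -> X <= 2 * C * a `^ beta.
Proof.
move=> C0 e10 e1a e20 e2a b0 ba X1 X2.
have a0 : 0 <= a by exact: le_trans e1a.
have a0' : 0 <= alpha by apply: le_trans ba; exact: ltW.
case: (leP a 1) => a1.
  apply: (le_trans X2).
  have -> : 2 * C * a `^ beta = C * a `^ beta + C * a `^ beta.
    by rewrite -mulrA -[2]/(1+1) mulrDl mul1r.
  apply: lerD; apply: ler_wpM2l => //.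
    exact: powR_mono (ltW b0) e10 e1a.
  apply: le_trans (powR_mono a0' e20 e2a) _; exact: powR_swap.
apply: (le_trans X1); rewrite -[X in X <= _]mulr1; apply: ler_wpM2l.
  by rewrite mulr_ge0.
by apply: powR_ge1 => //; [exact: ltW | exact: ltW].
Qed.

Lemma key4 (C a b P X beta alpha : R) : 0 <= C -> 0 <= a -> 0 <= b ->
  0 < beta -> beta < alpha -> P <= a `^ beta * b `^ (alpha - beta) ->
  X <= C * P + 2 * C * a `^ alpha -> X <= 2 * C * b `^ alpha ->
  X <= 3 * C * (a `^ beta * b `^ (alpha - beta)).
Proof.
move=> C0 a0 b0 b0' ba HP X1 X2.
have ab0 : 0 < alpha - beta by rewrite subr_gt0.
have sp (t : R) : t `^ alpha = t `^ beta * t `^ (alpha - beta).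
  rewrite -powRD; first by rewrite addrC subrK.
  by rewrite addrC subrK gt_eqF // (lt_trans b0' ba).
have Q0 : 0 <= a `^ beta * b `^ (alpha - beta) by rewrite mulr_ge0 // powR_ge0.
case: (leP a b) => hab.
  apply: (le_trans X1).
  have : a `^ alpha <= a `^ beta * b `^ (alpha - beta).
    rewrite sp; apply: ler_wpM2l; first exact: powR_ge0.
    exact: powR_mono (ltW ab0) a0 hab.
  move=> h.
  have -> : 3 * C * (a `^ beta * b `^ (alpha - beta)) =
    C * (a `^ beta * b `^ (alpha - beta)) + 2 * C * (a `^ beta * b `^ (alpha - beta)).
    by rewrite -[3]/(1+2) !mulrDl mul1r.
  apply: lerD; first exact: ler_wpM2l.
  apply: ler_wpM2l => //; by rewrite mulr_ge0.
apply: (le_trans X2).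
have : b `^ alpha <= a `^ beta * b `^ (alpha - beta).
  rewrite sp; apply: ler_wpM2r; first exact: powR_ge0.
  exact: powR_mono (ltW b0') b0 (ltW hab).
move=> h; apply: ler_pM => //.
  by rewrite mulr_ge0.
  exact: powR_ge0.
by apply: ler_wpM2r => //; rewrite ler_nat.
Qed.

Lemma id1 (V : zmodType) (A B C D E F : V) :
  A - E - C + F = (A - B - C + D) + (B - E) - (D - F).
Proof.
rewrite opprB -!addrA; congr (_ + _).
rewrite [D + _]addrCA [D + (_ + _)]addrCA [D + (F - D)]addrC subrK.
by rewrite [- B + _]addrCA addKr addrCA.
Qed.
Lemma id2 (V : zmodType) (A C E F : V) :
  A - E - C + F = (A - C) - (E - F).
Proof. by rewrite opprB -!addrA; congr (_ + _); rewrite addrCA [- E + F]addrC. Qed.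
Lemma id0 (V : zmodType) (A B E : V) : A - E = (A - B) + (B - E).
Proof. by rewrite addrA subrK. Qed.

Lemma fin2 {C Lb M d : R} : 0<=C -> 0<=Lb -> Lb <= M -> 0 <= d ->
  2*C*(Lb*d) <= 3*M*C*d.
Proof.
move=> C0 L0 LM d0.
have Cd : 0 <= C * d by rewrite mulr_ge0.
have -> : 2*C*(Lb*d) = (2*Lb) * (C*d) by rewrite mulrCA !mulrA [2*Lb]mulrC.
have -> : 3*M*C*d = (3*M) * (C*d) by rewrite !mulrA.
apply: ler_wpM2r => //; apply: ler_pM => //; first by rewrite ler_nat.
Qed.

Lemma fin3 (C Lb M d : R) : 0<=C -> 0<=Lb -> Lb <= M -> 0 <= d ->
  C*(Lb*d) <= 3*M*C*d.
Proof.
move=> C0 L0 LM d0; apply: (le_trans _ (fin2 C0 L0 LM d0)).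
have Cd : 0 <= C * (Lb * d) by rewrite !mulr_ge0.
rewrite -[X in X <= _]mul1r -[2*C*(Lb*d)]mulrA; apply: ler_wpM2r => //.
by rewrite ler1n.
Qed.

Lemma fin4 (C Lb M d : R) : 0<=C -> 0<=Lb -> Lb <= M -> 0 <= d ->
  3*C*(Lb*d) <= 3*M*C*d.
Proof.
move=> C0 L0 LM d0.
have Cd : 0 <= C * d by rewrite mulr_ge0.
have -> : 3*C*(Lb*d) = (3*Lb) * (C*d) by rewrite mulrCA !mulrA [3*Lb]mulrC.
have -> : 3*M*C*d = (3*M) * (C*d) by rewrite !mulrA.
by apply: ler_wpM2r => //; apply: ler_pM.
Qed.

Lemma eucl_ge0 n (v : 'rV[R]_n) : 0 <= eucl v.
Proof. exact: sqrtr_ge0. Qed.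

Lemma eucl0 n : eucl (0 : 'rV[R]_n) = 0.
Proof. by rewrite /eucl big1 ?sqrtr0 // => i _; rewrite mxE expr2 mulr0. Qed.

Lemma eucl_sq n (v : 'rV[R]_n) : Num.sqrt (eucl v ^+ 2) = eucl v.
Proof. by rewrite sqrtr_sqr ger0_norm // eucl_ge0. Qed.

Lemma fst_le du ds (p q : 'rV[R]_du * 'rV[R]_ds) : eucl (p.1 - q.1) <= pdist p q.
Proof.
rewrite /pdist -{1}(@eucl_sq _ (p.1 - q.1)) ler_sqrt; last first.
  by rewrite addr_ge0 // sqr_ge0.
by rewrite lerDl sqr_ge0.
Qed.

Lemma snd_le du ds (p q : 'rV[R]_du * 'rV[R]_ds) : eucl (p.2 - q.2) <= pdist p q.
Proof.
rewrite /pdist -{1}(@eucl_sq _ (p.2 - q.2)) ler_sqrt; last first.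
  by rewrite addr_ge0 // sqr_ge0.
by rewrite lerDr sqr_ge0.
Qed.

Lemma pdist_x du ds (x x' : 'rV[R]_du) (y : 'rV[R]_ds) :
  pdist (x, y) (x', y) = eucl (x - x').
Proof. by rewrite /pdist /= subrr eucl0 (_ : (0:R) ^+ 2 = 0) ?(addr0, add0r) ?eucl_sq // expr2 mulr0. Qed.

Lemma pdist_y du ds (x : 'rV[R]_du) (y y' : 'rV[R]_ds) :
  pdist (x, y) (x, y') = eucl (y - y').
Proof. by rewrite /pdist /= subrr eucl0 (_ : (0:R) ^+ 2 = 0) ?(addr0, add0r) ?eucl_sq // expr2 mulr0. Qed.

End Aux.


Arguments powR_mono {R r x y}.
Arguments fst_le {R du ds} p q.
Arguments snd_le {R du ds} p q.
Arguments eucl_ge0 {R n} v.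
Arguments fin2 {R C Lb M d}.
Arguments fin3 {R C Lb M d}.
Arguments fin4 {R C Lb M d}.
Arguments key2 {R C a e1 e2 X beta alpha}.
Arguments key4 {R C a b P X beta alpha}.

Lemma comp_bound (R : realType) (du ds m n : nat) (alpha beta : R)
  (Psi : 'rV[R]_du * 'rV[R]_ds -> 'rV[R]_du * 'rV[R]_ds)
  (K : 'rV[R]_du -> 'rV[R]_ds -> 'M[R]_(m, n)) (L C : R) :
  0 < alpha -> alpha <= 1 -> 0 < beta -> beta < alpha ->
  sends_stable_leaves Psi -> lipschitz_with Psi L -> Kbound alpha beta K C ->
  Kbound alpha beta (Kcomp K Psi) (3 * Num.max 1 L * C).
Proof.
move=> a0 a1 b0 ba hleaf [L0 HL] HK x x' y y'.
rewrite /Kcomp (hleaf x y' y) (hleaf x' y' y).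
set u := (Psi (x, y)).1; set u' := (Psi (x', y)).1.
set v := (Psi (x, y)).2; set w := (Psi (x', y)).2.
set v' := (Psi (x, y')).2; set w' := (Psi (x', y')).2.
set dx := eucl (x - x'); set dy := eucl (y - y').
set M := Num.max 1 L.
have M1 : 1 <= M by rewrite le_max lexx.
have LM : L <= M by rewrite le_max lexx orbT.
have C0 : 0 <= C by have [h _ _ _] := HK u u v v; exact: le_trans (normr_ge0 _) h.
have dx0 : 0 <= dx by exact: eucl_ge0.
have dy0 : 0 <= dy by exact: eucl_ge0.
have hu : eucl (u - u') <= L * dx.
  by rewrite /dx -(pdist_x _ _ _ x x' y); apply: le_trans (fst_le _ _) (HL _ _).
have hvw : eucl (v - w) <= L * dx.
  by rewrite /dx -(pdist_x _ _ _ x x' y); apply: le_trans (snd_le _ _) (HL _ _).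
have hvw' : eucl (v' - w') <= L * dx.
  by rewrite /dx -(pdist_x _ _ _ x x' y'); apply: le_trans (snd_le _ _) (HL _ _).
have hvv : eucl (v - v') <= L * dy.
  by rewrite /dy -(pdist_y _ _ _ x y y'); apply: le_trans (snd_le _ _) (HL _ _).
have hww : eucl (w - w') <= L * dy.
  by rewrite /dy -(pdist_y _ _ _ x' y y'); apply: le_trans (snd_le _ _) (HL _ _).
have b1 : beta <= 1 by exact: le_trans (ltW ba) a1.
have LbM : L `^ beta <= M by apply: powR_leM => //; exact: ltW.
have LaM : L `^ alpha <= M by apply: powR_leM => //; exact: ltW.
have e0 : forall k (z : 'rV[R]_k), 0 <= eucl z by move=> k z; exact: eucl_ge0.
have pa : forall e t, 0 <= e -> e <= t -> e `^ alpha <= t `^ alpha.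
  by move=> e t he ht; exact: powR_mono (ltW a0) he ht.
have pb : forall e t, 0 <= e -> e <= t -> e `^ beta <= t `^ beta.
  by move=> e t he ht; exact: powR_mono (ltW b0) he ht.
have Ldx0 : 0 <= L * dx by rewrite mulr_ge0.
have Ldy0 : 0 <= L * dy by rewrite mulr_ge0.
split.
- have [h _ _ _] := HK u u v v.
  apply: le_trans h _.
  have M0 : 0 <= M by exact: le_trans ler01 M1.
  have h3 : 1 <= 3 * M.
    apply: le_trans M1 _; rewrite -[X in X <= _]mul1r.
    by apply: ler_wpM2r => //; rewrite ler1n.
  by rewrite -[X in X <= _]mul1r; apply: ler_wpM2r.
- have [_ h1 _ _] := HK u u' v v.
  have [_ _ h2 _] := HK u' u' v w.
  have [n1 _ _ _] := HK u u v v.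
  have [n2 _ _ _] := HK u' u' w w.
  have X1 : `|K u v - K u' w| <= 2 * C.
    apply: le_trans (ler_normB _ _) _.
    by rewrite -[2]/(1+1) mulrDl mul1r lerD.
  have X2 : `|K u v - K u' w| <= C * eucl (u - u') `^ beta + C * eucl (v - w) `^ alpha.
    have -> : K u v - K u' w = (K u v - K u' v) + (K u' v - K u' w) by exact: id0.
    apply: le_trans (ler_normD _ _) _.
    exact: lerD.
  have X3 := key2 C0 (e0 _ _) hu (e0 _ _) hvw b0 (ltW ba) X1 X2.
  apply: le_trans X3 _.
  rewrite (powRM _ L0 dx0).
  exact: (fin2 C0 (powR_ge0 L beta) LbM (powR_ge0 dx beta)).
- have [_ _ h _] := HK u u v v'.
  apply: le_trans h _.
  apply: le_trans (ler_wpM2l C0 (pa _ _ (e0 _ _) hvv)) _.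
  rewrite (powRM _ L0 dy0).
  exact: (fin3 C0 (powR_ge0 L alpha) LaM (powR_ge0 dy alpha)).
- have [_ _ _ h1] := HK u u' v v'.
  have [_ _ h2 _] := HK u' u' v w.
  have [_ _ h3 _] := HK u' u' v' w'.
  have [_ _ h4 _] := HK u u v v'.
  have [_ _ h5 _] := HK u' u' w w'.
  have ab0 : 0 < alpha - beta by rewrite subr_gt0.
  have hP : eucl (u - u') `^ beta * eucl (v - v') `^ (alpha - beta) <=
      (L * dx) `^ beta * (L * dy) `^ (alpha - beta).
    apply: ler_pM; try exact: powR_ge0; first exact: pb.
    exact: powR_mono (ltW ab0) (e0 _ _) hvv.
  have X1 : `|K u v - K u' w - K u v' + K u' w'| <=
      C * (eucl (u - u') `^ beta * eucl (v - v') `^ (alpha - beta))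
      + 2 * C * (L * dx) `^ alpha.
    have -> : K u v - K u' w - K u v' + K u' w' =
      (K u v - K u' v - K u v' + K u' v') + (K u' v - K u' w) - (K u' v' - K u' w').
      exact: id1.
    apply: le_trans (ler_normB _ _) _.
    have -> : 2 * C * (L * dx) `^ alpha = C * (L * dx) `^ alpha + C * (L * dx) `^ alpha.
      by rewrite -mulrA -[2]/(1+1) mulrDl mul1r.
    rewrite [X in _ <= X]addrA; apply: lerD; last first.
      exact: le_trans h3 (ler_wpM2l C0 (pa _ _ (e0 _ _) hvw')).
    apply: le_trans (ler_normD _ _) _; apply: lerD.
      rewrite mulrA; exact: h1.
    exact: le_trans h2 (ler_wpM2l C0 (pa _ _ (e0 _ _) hvw)).
  have X2 : `|K u v - K u' w - K u v' + K u' w'| <= 2 * C * (L * dy) `^ alpha.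
    have -> : K u v - K u' w - K u v' + K u' w' = (K u v - K u v') - (K u' w - K u' w').
      exact: id2.
    apply: le_trans (ler_normB _ _) _.
    have -> : 2 * C * (L * dy) `^ alpha = C * (L * dy) `^ alpha + C * (L * dy) `^ alpha.
      by rewrite -mulrA -[2]/(1+1) mulrDl mul1r.
    apply: lerD.
      exact: le_trans h4 (ler_wpM2l C0 (pa _ _ (e0 _ _) hvv)).
    exact: le_trans h5 (ler_wpM2l C0 (pa _ _ (e0 _ _) hww)).
  have X3 := key4 C0 Ldx0 Ldy0 b0 ba hP X1 X2.
  apply: le_trans X3 _.
  rewrite (powRM _ L0 dx0) (powRM _ L0 dy0).
  have eL : L `^ beta * L `^ (alpha - beta) = L `^ alpha.
    by rewrite -powRD addrC subrK // gt_eqF.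
  have E : (L `^ beta * dx `^ beta) * (L `^ (alpha - beta) * dy `^ (alpha - beta))
    = L `^ alpha * (dx `^ beta * dy `^ (alpha - beta)) by rewrite mulrACA eL.
  rewrite E -[3 * M * C * _ * _]mulrA.
  apply: (fin4 C0 (powR_ge0 L alpha) LaM).
  by rewrite mulr_ge0 // powR_ge0.
Qed.

Theorem mainTheorem11 (R : realType) (du ds m n : nat) (alpha beta : R)
  (Psi : 'rV[R]_du * 'rV[R]_ds -> 'rV[R]_du * 'rV[R]_ds)
  (K : 'rV[R]_du -> 'rV[R]_ds -> 'M[R]_(m, n)) :
  0 < alpha -> alpha <= 1 -> 0 < beta -> beta < alpha ->
  sends_stable_leaves Psi ->
  (exists L0, lipschitz_with Psi L0) ->
  inKclass alpha beta K ->
  inKclass alpha beta (Kcomp K Psi) /\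
  Knorm alpha beta (Kcomp K Psi)
    <= 3 * Num.max 1 (lip_const Psi) * Knorm alpha beta K.
Proof.
move=> a0 a1 b0 ba hleaf [L0 HL0] [C0 HK0].
have CB := fun L C => @comp_bound R du ds m n alpha beta Psi K L C a0 a1 b0 ba hleaf.
split; first by exists (3 * Num.max 1 L0 * C0); exact: CB.
have Kb0 : forall (F : 'rV[R]_du -> 'rV[R]_ds -> 'M[R]_(m, n)) C,
    Kbound alpha beta F C -> 0 <= C.
  move=> F C hC; have [h _ _ _] := hC 0 0 0 0; exact: le_trans (normr_ge0 _) h.
have lbK : forall F : 'rV[R]_du -> 'rV[R]_ds -> 'M[R]_(m, n),
    has_lbound [set C | Kbound alpha beta F C].
  by move=> F; exists 0 => C hC; exact: Kb0 hC.
have lbL : has_lbound [set L | lipschitz_with Psi L].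
  by exists 0 => L [hL _].
set Kn := Knorm alpha beta (Kcomp K Psi).
set k := Knorm alpha beta K.
set l := lip_const Psi.
have hKn : forall L C, lipschitz_with Psi L -> Kbound alpha beta K C ->
    Kn <= 3 * Num.max 1 L * C.
  by move=> L C hL hC; apply: (ge_inf (lbK _)); exact: CB.
have k0 : 0 <= k.
  by apply: lb_le_inf; [exists C0 | move=> C hC; exact: Kb0 hC].
have M1 : forall L : R, 1 <= Num.max 1 L by move=> L; rewrite le_max lexx.
have step1 : forall L, lipschitz_with Psi L -> Kn <= 3 * Num.max 1 L * k.
  move=> L hL.
  have pos : 0 < 3 * Num.max 1 L by rewrite mulr_gt0 // (lt_le_trans ltr01 (M1 L)).
  rewrite mulrC -ler_pdivrMr //.
  apply: lb_le_inf; first by exists C0.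
  move=> C hC; rewrite ler_pdivrMr // mulrC; exact: hKn.
case: (eqVneq k 0) => [k00|kn0].
  have := step1 L0 HL0; rewrite k00 !mulr0 //.
have kp : 0 < k by rewrite lt_neqAle eq_sym kn0 k0.
have k3 : 0 < 3 * k by rewrite mulr_gt0.
set t := Kn / (3 * k).
have ht : forall L, lipschitz_with Psi L -> t <= Num.max 1 L.
  move=> L hL; rewrite /t ler_pdivrMr // mulrCA mulrA; exact: step1.
have tl : t <= Num.max 1 l.
  case: (leP t 1) => t1; first by rewrite le_max t1.
  rewrite le_max; apply/orP; right.
  apply: lb_le_inf; first by exists L0.
  move=> L hL; have := ht L hL; rewrite le_max => /orP[h|//].
  by move: (lt_le_trans t1 h); rewrite ltxx.
move: tl; rewrite /t ler_pdivrMr // => h.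
by rewrite -mulrA mulrCA; exact: h.
Qed.
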